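(* Let $\mathcal E$ be a length exact category satisfying the Jordan–Hölder property. Then $\mathcal P(\operatorname{simp}\mathcal E)\to\operatorname{Serre}(\mathcal E)$, $\mathcal X\mapsto\langle\mathcal X\rangle_{\mathrm{Serre}}$, is an inclusion-preserving bijection.
   Context: An exact category $\mathcal E$ is an additive full subcategory of an abelian category closed under extensions, with conflations the short exact sequences with all terms in $\mathcal E$ and inflations the first maps of conflations. An admissible subobject of $X$ is an equivalence class of inflations $Y\to X$; an admissible subobject series $0=X_0\le\cdots\le X_n=X$ is proper of length $n$ if all factors $X_i/X_{i-1}$ are nonzero. $X$ is of finite length if the lengths of its proper admissible subobject series are bounded; $\mathcal E$ is length if all objects are of finite length. A simple object is a nonzero object whose only admissible subobjects are $0$ and itself; $\operatorname{simp}\mathcal E$ is the set of their isomorphism classes. A composition series is an admissible subobject series with all factors simple; two series are isomorphic if they have the same length $n$ and there is a permutation $\sigma$ with $X_i/X_{i-1}\cong Y_{\sigma(i)}/Y_{\sigma(i)-1}$. $\mathcal E$ satisfies the Jordan–Hölder property if for each object all its composition series are isomorphic. A Serre subcategory is a full additive subcategory $\mathcal S$ closed under isomorphisms such that for each conflation $0\to X\to Y\to Z\to0$, $Y\in\mathcal S$ iff $X,Z\in\mathcal S$; $\langle\mathcal X\rangle_{\mathrm{Serre}}$ is the smallest one containing $\mathcal X$. *)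

(* Defs.v *)
From HB Require Import structures.
From mathcomp Require Import all_boot all_algebra.

Set Implicit Arguments.
Unset Strict Implicit.
Unset Printing Implicit Defensive.

Import GRing.Theory.
Local Open Scope ring_scope.

(* A preadditive category: hom-sets are abelian groups, composition (written in
   diagrammatic order: comp f g = "g after f") is associative, unital, bilinear. *)
Record preadditive := PreAdditive {
  Obj : Type;
  Hom : Obj -> Obj -> zmodType;
  idm : forall X, Hom X X;
  comp : forall X Y Z, Hom X Y -> Hom Y Z -> Hom X Z;
  compA : forall W X Y Z (f : Hom W X) (g : Hom X Y) (h : Hom Y Z),
      comp (comp f g) h = comp f (comp g h);
  comp1m : forall X Y (f : Hom X Y), comp (idm X) f = f;
  compm1 : forall X Y (f : Hom X Y), comp f (idm Y) = f;
  compDl : forall X Y Z (f f' : Hom X Y) (g : Hom Y Z),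
      comp (f + f') g = comp f g + comp f' g;
  compDr : forall X Y Z (f : Hom X Y) (g g' : Hom Y Z),
      comp f (g + g') = comp f g + comp f g'
}.

Arguments Hom {p} _ _.
Arguments idm {p} X.
Arguments comp {p X Y Z} _ _.

Definition is_zero_obj {C : preadditive} (Z : Obj C) : Prop :=
  forall X : Obj C, (forall a b : Hom Z X, a = b) /\ (forall a b : Hom X Z, a = b).

Definition is_iso {C : preadditive} {X Y : Obj C} (f : Hom X Y) : Prop :=
  exists g : Hom Y X, comp f g = idm X /\ comp g f = idm Y.

Definition iso_obj {C : preadditive} (X Y : Obj C) : Prop :=
  exists f : Hom X Y, is_iso f.

Definition is_mono {C : preadditive} {X Y : Obj C} (f : Hom X Y) : Prop :=
  forall (W : Obj C) (a b : Hom W X), comp a f = comp b f -> a = b.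

Definition is_epi {C : preadditive} {X Y : Obj C} (f : Hom X Y) : Prop :=
  forall (W : Obj C) (a b : Hom Y W), comp f a = comp f b -> a = b.

Definition is_kernel {C : preadditive} {X Y K : Obj C} (f : Hom X Y) (k : Hom K X) : Prop :=
  comp k f = 0 /\
  forall (W : Obj C) (h : Hom W X), comp h f = 0 -> exists! u : Hom W K, comp u k = h.

Definition is_cokernel {C : preadditive} {X Y Q : Obj C} (f : Hom X Y) (q : Hom Y Q) : Prop :=
  comp f q = 0 /\
  forall (W : Obj C) (h : Hom Y W), comp f h = 0 -> exists! u : Hom Q W, comp q u = h.

Definition is_biproduct {C : preadditive} {X Y P : Obj C}
  (i1 : Hom X P) (i2 : Hom Y P) (p1 : Hom P X) (p2 : Hom P Y) : Prop :=
  [/\ comp i1 p1 = idm X, comp i2 p2 = idm Y, comp i1 p2 = 0, comp i2 p1 = 0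
    & comp p1 i1 + comp p2 i2 = idm P].

Definition abelian (C : preadditive) : Prop :=
  [/\ (exists Z : Obj C, is_zero_obj Z),
      (forall X Y : Obj C, exists (P : Obj C) (i1 : Hom X P) (i2 : Hom Y P)
          (p1 : Hom P X) (p2 : Hom P Y), is_biproduct i1 i2 p1 p2),
      (forall (X Y : Obj C) (f : Hom X Y), exists (K : Obj C) (k : Hom K X), is_kernel f k),
      (forall (X Y : Obj C) (f : Hom X Y), exists (Q : Obj C) (q : Hom Y Q), is_cokernel f q)
    & ((forall (X Y : Obj C) (f : Hom X Y), is_mono f ->
          exists (Z : Obj C) (g : Hom Y Z), is_kernel g f) /\
       (forall (X Y : Obj C) (f : Hom X Y), is_epi f ->
          exists (W : Obj C) (h : Hom W X), is_cokernel h f))].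

Definition short_exact {C : preadditive} {X Y Z : Obj C} (f : Hom X Y) (g : Hom Y Z) : Prop :=
  is_kernel g f /\ is_cokernel f g.

(* An exact category: a full additive subcategory (given by its class of
   objects E) of the abelian category C, closed under extensions. *)
Definition exact_subcat {C : preadditive} (E : Obj C -> Prop) : Prop :=
  [/\ (exists Z : Obj C, is_zero_obj Z /\ E Z),
      (forall X Y : Obj C, E X -> iso_obj X Y -> E Y)
    & (forall (X Y Z : Obj C) (f : Hom X Y) (g : Hom Y Z),
        short_exact f g -> E X -> E Z -> E Y)].

Definition conflation {C : preadditive} (E : Obj C -> Prop) {X Y Z : Obj C}
  (f : Hom X Y) (g : Hom Y Z) : Prop :=
  [/\ E X, E Y, E Z & short_exact f g].

Definition inflation {C : preadditive} (E : Obj C -> Prop) {X Y : Obj C} (f : Hom X Y) : Prop :=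
  exists (Z : Obj C) (g : Hom Y Z), conflation E f g.

(* An admissible subobject series 0 = X_0 >-> X_1 >-> ... >-> X_n = X of length
   n = slen, each step an inflation; X_0 is a zero object and X_n is
   isomorphic to X.  (Values of sobj/smap beyond n are irrelevant.) *)
Record adm_series {C : preadditive} (E : Obj C -> Prop) (X : Obj C) := AdmSeries {
  slen : nat;
  sobj : nat -> Obj C;
  smap : forall i : nat, Hom (sobj i) (sobj i.+1);
  sobj0 : is_zero_obj (sobj 0);
  sinfl : forall i : nat, (i < slen)%N -> inflation E (smap i);
  stop : iso_obj (sobj slen) X
}.

Arguments slen {C E X} a.
Arguments sobj {C E X} a i.
Arguments smap {C E X} a i.

(* the i-th factor X_{i+1}/X_i (0-based) is nonzero *)
Definition factor_nonzero {C : preadditive} {E : Obj C -> Prop} {X : Obj C}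
  (s : adm_series E X) (i : nat) : Prop :=
  exists (Q : Obj C) (q : Hom (sobj s i.+1) Q), is_cokernel (smap s i) q /\ ~ is_zero_obj Q.

Definition proper_series {C : preadditive} {E : Obj C -> Prop} {X : Obj C}
  (s : adm_series E X) : Prop :=
  forall i : nat, (i < slen s)%N -> factor_nonzero s i.

Definition finite_length {C : preadditive} (E : Obj C -> Prop) (X : Obj C) : Prop :=
  exists N : nat, forall s : adm_series E X, proper_series s -> (slen s <= N)%N.

Definition length_cat {C : preadditive} (E : Obj C -> Prop) : Prop :=
  forall X : Obj C, E X -> finite_length E X.

Definition simple_obj {C : preadditive} (E : Obj C -> Prop) (S : Obj C) : Prop :=
  [/\ E S, ~ is_zero_obj S
    & forall (Y : Obj C) (i : Hom Y S), inflation E i -> is_zero_obj Y \/ is_iso i].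

Definition composition_series {C : preadditive} {E : Obj C -> Prop} {X : Obj C}
  (s : adm_series E X) : Prop :=
  forall i : nat, (i < slen s)%N ->
    exists (Q : Obj C) (q : Hom (sobj s i.+1) Q), is_cokernel (smap s i) q /\ simple_obj E Q.

Definition series_iso {C : preadditive} {E : Obj C -> Prop} {X : Obj C}
  (s t : adm_series E X) : Prop :=
  slen s = slen t /\
  exists sigma : nat -> nat,
    [/\ (forall i, (i < slen s)%N -> (sigma i < slen s)%N),
        (forall i j, (i < slen s)%N -> (j < slen s)%N -> sigma i = sigma j -> i = j)
      & forall i, (i < slen s)%N ->
          exists (Q : Obj C) (q : Hom (sobj s i.+1) Q)
                 (Q' : Obj C) (q' : Hom (sobj t (sigma i).+1) Q'),
            [/\ is_cokernel (smap s i) q, is_cokernel (smap t (sigma i)) q'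
              & iso_obj Q Q']].

Definition jordan_hoelder {C : preadditive} (E : Obj C -> Prop) : Prop :=
  forall X : Obj C, E X -> forall s t : adm_series E X,
    composition_series s -> composition_series t -> series_iso s t.

Definition is_serre {C : preadditive} (E : Obj C -> Prop) (S : Obj C -> Prop) : Prop :=
  [/\ (forall X, S X -> E X),
      (exists Z : Obj C, is_zero_obj Z /\ S Z),
      (forall X Y : Obj C, S X -> iso_obj X Y -> S Y)
    & forall (X Y Z : Obj C) (f : Hom X Y) (g : Hom Y Z),
        conflation E f g -> (S Y <-> S X /\ S Z)].

Definition serre_gen {C : preadditive} (E : Obj C -> Prop) (Xs : Obj C -> Prop) : Obj C -> Prop :=
  fun Y => forall S : Obj C -> Prop, is_serre E S -> (forall Z, Xs Z -> S Z) -> S Y.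

(* A subset of simp E (a set of isomorphism classes of simple objects),
   represented by the isomorphism-closed class of its members. *)
Definition simp_subset {C : preadditive} (E : Obj C -> Prop) (Xs : Obj C -> Prop) : Prop :=
  (forall S, Xs S -> simple_obj E S) /\
  (forall S S', Xs S -> iso_obj S S' -> Xs S').

(* Main.v *)
Require Import Defs.
From mathcomp Require Import all_boot all_algebra.
From Stdlib Require Import Classical.
From mathcomp Require Import zify.
From Stdlib Require Import Lia Compare_dec.
Set Implicit Arguments.
Unset Strict Implicit.
Unset Printing Implicit Defensive.
Import GRing.Theory.

Notation cA := Defs.compA.
Notation Hom := Defs.Hom.
Notation comp := Defs.comp.

Lemma comp0m {C : preadditive} {X Y Z : Obj C} (g : Hom Y Z) : comp (0%R : Hom X Y) g = 0%R.
Proof.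
have H := compDl (0%R : Hom X Y) 0%R g; rewrite addr0 in H.
by apply: (addrI (comp (0%R : Hom X Y) g)); rewrite addr0 -H.
Qed.

Lemma compm0 {C : preadditive} {X Y Z : Obj C} (f : Hom X Y) : comp f (0%R : Hom Y Z) = 0%R.
Proof.
have H := compDr f (0%R : Hom Y Z) 0%R; rewrite addr0 in H.
by apply: (addrI (comp f (0%R : Hom Y Z))); rewrite addr0 -H.
Qed.

Lemma compNl {C : preadditive} {X Y Z : Obj C} (f : Hom X Y) (g : Hom Y Z) : comp (- f)%R g = (- comp f g)%R.
Proof.
apply/eqP; rewrite -subr_eq0 opprK -compDl addNr comp0m //.
Qed.

Lemma compNr {C : preadditive} {X Y Z : Obj C} (f : Hom X Y) (g : Hom Y Z) : comp f (- g)%R = (- comp f g)%R.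
Proof.
apply/eqP; rewrite -subr_eq0 opprK -compDr addNr compm0 //.
Qed.

Lemma compBl {C : preadditive} {X Y Z : Obj C} (f f' : Hom X Y) (g : Hom Y Z) : comp (f - f')%R g = (comp f g - comp f' g)%R.
Proof. by rewrite compDl compNl. Qed.

Lemma compBr {C : preadditive} {X Y Z : Obj C} (f : Hom X Y) (g g' : Hom Y Z) : comp f (g - g')%R = (comp f g - comp f g')%R.
Proof. by rewrite compDr compNr. Qed.

Lemma kernel_mono {C : preadditive} {X Y K : Obj C} (f : Hom X Y) (k : Hom K X) :
  is_kernel f k -> is_mono k.
Proof.
move=> [k0 H] W a b e.
have h0 : comp (comp a k) f = 0%R by rewrite cA k0 compm0.
have [u [_ U]] := H W _ h0.
by rewrite -(U a erefl) (U b (esym e)).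
Qed.

Lemma coker_epi {C : preadditive} {X Y Q : Obj C} (f : Hom X Y) (q : Hom Y Q) :
  is_cokernel f q -> is_epi q.
Proof.
move=> [k0 H] W a b e.
have h0 : comp f (comp q a) = 0%R by rewrite -cA k0 comp0m.
have [u [_ U]] := H W _ h0.
by rewrite -(U a erefl) (U b (esym e)).
Qed.

Lemma mono_comp {C : preadditive} {X Y Z : Obj C} (f : Hom X Y) (g : Hom Y Z) :
  is_mono f -> is_mono g -> is_mono (comp f g).
Proof. move=> mf mg W a b; rewrite -!cA => /mg; exact: mf. Qed.

Lemma epi_comp {C : preadditive} {X Y Z : Obj C} (f : Hom X Y) (g : Hom Y Z) :
  is_epi f -> is_epi g -> is_epi (comp f g).
Proof. move=> mf mg W a b; rewrite !cA => /mf; exact: mg. Qed.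

Lemma mono_compl {C : preadditive} {X Y Z : Obj C} (f : Hom X Y) (g : Hom Y Z) :
  is_mono (comp f g) -> is_mono f.
Proof. move=> m W a b e; apply: m; by rewrite -!cA e. Qed.

Lemma epi_coker {C : preadditive} {X Y K : Obj C} (e : Hom X Y) (k : Hom K X) :
  abelian C -> is_epi e -> is_kernel e k -> is_cokernel k e.
Proof.
move=> [_ _ _ _ [_ Hepi]] ee [k0 kH]; split => // W m km.
have [V [h0 [h0e Hc]]] := Hepi _ _ e ee.
have [u [hu _]] := kH _ h0 h0e.
have hm : comp h0 m = 0%R by rewrite -hu cA km compm0.
have [v [vm _]] := Hc _ m hm.
exists v; split => // v' vm'; apply: ee; by rewrite vm vm'.
Qed.

Lemma mono_ker {C : preadditive} {X Y Q : Obj C} (m : Hom X Y) (q : Hom Y Q) :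
  abelian C -> is_mono m -> is_cokernel m q -> is_kernel q m.
Proof.
move=> [_ _ _ _ [Hmono _]] mm [q0 qH]; split => // W h hq.
have [V [g0 [g0e Hk]]] := Hmono _ _ m mm.
have [u [hu _]] := qH _ g0 g0e.
have hm : comp h g0 = 0%R by rewrite -hu -cA hq comp0m.
have [v [vm _]] := Hk _ h hm.
exists v; split => // v' vm'; apply: mm; by rewrite vm vm'.
Qed.

Lemma iso_idm {C : preadditive} (X : Obj C) : is_iso (idm X).
Proof. by exists (idm X); rewrite comp1m. Qed.

Lemma iso_obj_refl {C : preadditive} (X : Obj C) : iso_obj X X.
Proof. exists (idm X); exact: iso_idm. Qed.

Lemma iso_comp {C : preadditive} {X Y Z : Obj C} (f : Hom X Y) (g : Hom Y Z) :
  is_iso f -> is_iso g -> is_iso (comp f g).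
Proof.
move=> [f' [f1 f2]] [g' [g1 g2]]; exists (comp g' f'); split.
  by rewrite cA -(cA g g') g1 comp1m f1.
by rewrite cA -(cA f' f) f2 comp1m g2.
Qed.

Lemma iso_inv {C : preadditive} {X Y : Obj C} (f : Hom X Y) :
  is_iso f -> exists f' : Hom Y X, [/\ is_iso f', comp f f' = idm X & comp f' f = idm Y].
Proof. move=> [f' [f1 f2]]; exists f'; split => //; by exists f. Qed.

Lemma iso_obj_trans {C : preadditive} (X Y Z : Obj C) : iso_obj X Y -> iso_obj Y Z -> iso_obj X Z.
Proof. move=> [f fi] [g gi]; exists (comp f g); exact: iso_comp. Qed.

Lemma iso_obj_sym {C : preadditive} (X Y : Obj C) : iso_obj X Y -> iso_obj Y X.
Proof. move=> [f /iso_inv [f' [fi _ _]]]; by exists f'. Qed.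

Lemma zero_iso {C : preadditive} (Z Z' : Obj C) : is_zero_obj Z -> iso_obj Z Z' -> is_zero_obj Z'.
Proof.
move=> zZ [f [f' [f1 f2]]] X; split.
  move=> a b; rewrite -(comp1m a) -(comp1m b) -f2 !cA; congr comp; exact: (proj1 (zZ X)).
move=> a b; rewrite -(compm1 a) -(compm1 b) -f2 -!cA; congr comp; exact: (proj2 (zZ X)).
Qed.

Lemma zero_zero_iso {C : preadditive} (Z Z' : Obj C) : is_zero_obj Z -> is_zero_obj Z' -> iso_obj Z Z'.
Proof.
move=> zZ zZ'; exists 0%R; exists 0%R; split.
  exact: (proj1 (zZ Z)). exact: (proj1 (zZ' Z')).
Qed.

Lemma zero_map_to {C : preadditive} {X Z : Obj C} (h : Hom X Z) : is_zero_obj Z -> h = 0%R.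
Proof. move=> zZ; exact: (proj2 (zZ X)). Qed.

Lemma zero_map_from {C : preadditive} {X Z : Obj C} (h : Hom Z X) : is_zero_obj Z -> h = 0%R.
Proof. move=> zZ; exact: (proj1 (zZ X)). Qed.

Lemma ker_isoL {C : preadditive} {X' X Y Z : Obj C} (f : Hom X Y) (g : Hom Y Z) (t : Hom X' X) (t' : Hom X X') :
  comp t t' = idm X' -> comp t' t = idm X -> is_kernel g f -> is_kernel g (comp t f).
Proof.
move=> e1 e2 [k0 kH]; split; first by rewrite cA k0 compm0.
move=> W h hg; have [u [uf U]] := kH W h hg.
exists (comp u t'); split; first by rewrite -cA (cA u) e2 compm1.
move=> v vf; have := U (comp v t); rewrite cA => /(_ vf) ->.
by rewrite cA e1 compm1.
Qed.

Lemma ker_isoR {C : preadditive} {X Y Z Z' : Obj C} (f : Hom X Y) (g : Hom Y Z) (t : Hom Z Z') (t' : Hom Z' Z) :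
  comp t t' = idm Z -> is_kernel g f -> is_kernel (comp g t) f.
Proof.
move=> e1 [k0 kH]; split; first by rewrite -cA k0 comp0m.
move=> W h hg; have hg' : comp h g = 0%R by rewrite -(compm1 (comp h g)) -e1 -(cA (comp h g) t t') (cA h g t) hg comp0m.
exact: kH.
Qed.

Lemma ker_isoM {C : preadditive} {X Y Y' Z : Obj C} (f : Hom X Y) (g : Hom Y Z) (r : Hom Y Y') (r' : Hom Y' Y) :
  comp r r' = idm Y -> comp r' r = idm Y' -> is_kernel g f -> is_kernel (comp r' g) (comp f r).
Proof.
move=> e1 e2 [k0 kH]; split; first by rewrite cA -(cA r) e1 comp1m k0.
move=> W h hg; have hh : comp (comp h r') g = 0%R by rewrite cA.
have [u [uf U]] := kH W _ hh.
exists u; split; first by rewrite -cA uf cA e2 compm1.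
move=> v vf; apply: U; by rewrite -vf cA cA e1 compm1.
Qed.

Lemma coker_isoR {C : preadditive} {X Y Z Z' : Obj C} (f : Hom X Y) (g : Hom Y Z) (t : Hom Z Z') (t' : Hom Z' Z) :
  comp t t' = idm Z -> comp t' t = idm Z' -> is_cokernel f g -> is_cokernel f (comp g t).
Proof.
move=> e1 e2 [k0 kH]; split; first by rewrite -cA k0 comp0m.
move=> W h hg; have [u [uf U]] := kH W h hg.
exists (comp t' u); split; first by rewrite cA -(cA t) e1 comp1m.
move=> v vf; have := U (comp t v); rewrite -cA => /(_ vf) ->.
by rewrite -cA e2 comp1m.
Qed.

Lemma coker_isoL {C : preadditive} {X' X Y Z : Obj C} (f : Hom X Y) (g : Hom Y Z) (t : Hom X' X) (t' : Hom X X') :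
  comp t' t = idm X -> is_cokernel f g -> is_cokernel (comp t f) g.
Proof.
move=> e1 [k0 kH]; split; first by rewrite cA k0 compm0.
move=> W h hg; have hg' : comp f h = 0%R by rewrite -(comp1m (comp f h)) -e1 (cA t' t (comp f h)) -(cA t f h) hg compm0.
exact: kH.
Qed.

Lemma coker_isoM {C : preadditive} {X Y Y' Z : Obj C} (f : Hom X Y) (g : Hom Y Z) (r : Hom Y Y') (r' : Hom Y' Y) :
  comp r r' = idm Y -> comp r' r = idm Y' -> is_cokernel f g -> is_cokernel (comp f r) (comp r' g).
Proof.
move=> e1 e2 [k0 kH]; split; first by rewrite cA -(cA r) e1 comp1m k0.
move=> W h hg; have hh : comp f (comp r h) = 0%R by rewrite -cA.
have [u [uf U]] := kH W _ hh.
exists u; split; first by rewrite cA uf -cA e2 comp1m.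
move=> v vf; apply: U; by rewrite -vf -cA -cA e1 comp1m.
Qed.

Lemma se_isoL {C : preadditive} {X' X Y Z : Obj C} (f : Hom X Y) (g : Hom Y Z) (t : Hom X' X) :
  is_iso t -> short_exact f g -> short_exact (comp t f) g.
Proof.
move=> [t' [e1 e2]] [K Q]; split; [exact: (ker_isoL e1 e2) | exact: (coker_isoL (t' := t') e2)].
Qed.

Lemma se_isoR {C : preadditive} {X Y Z Z' : Obj C} (f : Hom X Y) (g : Hom Y Z) (t : Hom Z Z') :
  is_iso t -> short_exact f g -> short_exact f (comp g t).
Proof.
move=> [t' [e1 e2]] [K Q]; split; [exact: (ker_isoR (t' := t') e1) | exact: (coker_isoR e1 e2)].
Qed.

Lemma se_isoM {C : preadditive} {X Y Y' Z : Obj C} (f : Hom X Y) (g : Hom Y Z) (r : Hom Y Y') (r' : Hom Y' Y) :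
  comp r r' = idm Y -> comp r' r = idm Y' -> short_exact f g -> short_exact (comp f r) (comp r' g).
Proof.
move=> e1 e2 [K Q]; split; [exact: ker_isoM | exact: coker_isoM].
Qed.

Lemma coker_unique {C : preadditive} {X Y Q Q' : Obj C} (f : Hom X Y) (q : Hom Y Q) (q' : Hom Y Q') :
  is_cokernel f q -> is_cokernel f q' -> exists t : Hom Q Q', is_iso t /\ comp q t = q'.
Proof.
move=> [q0 qH] [q0' qH'].
have [t [tq _]] := qH _ q' q0'.
have [t' [tq' _]] := qH' _ q q0.
exists t; split => //; exists t'; split.
  apply: (coker_epi (conj q0 qH)); by rewrite -cA tq tq' compm1.
apply: (coker_epi (conj q0' qH')); by rewrite -cA tq' tq compm1.
Qed.

Lemma coker_unique_obj {C : preadditive} {X Y Q Q' : Obj C} (f : Hom X Y) (q : Hom Y Q) (q' : Hom Y Q') :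
  is_cokernel f q -> is_cokernel f q' -> iso_obj Q Q'.
Proof. move=> H1 H2; have [t [ti _]] := coker_unique H1 H2; by exists t. Qed.

Lemma ker_zero_iso {C : preadditive} {X Y Z : Obj C} (f : Hom X Y) (g : Hom Y Z) :
  is_zero_obj Z -> is_kernel g f -> is_iso f.
Proof.
move=> zZ [k0 kH]; have [u [uf _]] := kH _ (idm Y) (zero_map_to _ zZ).
exists u; split => //.
apply: (kernel_mono (conj k0 kH)); by rewrite cA uf compm1 comp1m.
Qed.


Lemma core_lemma {C : preadditive} (E : Obj C -> Prop) :
  abelian C -> exact_subcat E ->
  forall (X Y Z W V : Obj C) (f : Hom X Y) (g : Hom Y Z) (j : Hom W Z) (k : Hom Z V),
  conflation E f g -> conflation E j k ->
  exists (P : Obj C) (a : Hom X P) (b : Hom P W) (p : Hom P Y),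
    [/\ conflation E a b, conflation E p (comp g k), comp a p = f & comp p g = comp b j].
Proof.
move=> Cab Eex X Y Z W V f g j k [EX EY EZ [fK gC]] [EW EZ' EV [jK kC]].
have Cab' := Cab; case: Cab' => _ Hbi Hker _ _.
have [B [i1 [i2 [p1 [p2 [e11 e22 e12 e21 eid]]]]]] := Hbi Y W.
pose e := (comp p1 g - comp p2 j)%R.
have i1e : comp i1 e = g by rewrite compBr -!cA e11 e12 comp1m comp0m subr0.
have i2e : comp i2 e = (- j)%R by rewrite compBr -!cA e22 e21 comp1m comp0m sub0r.
have gepi := coker_epi gC.
have jmono := kernel_mono jK.
have fmono := kernel_mono fK.
have eepi : is_epi e.
  move=> T v v' ev; apply: gepi; by rewrite -i1e !cA ev.
have [P [q qK]] := Hker _ _ e.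
have eC := epi_coker Cab eepi qK.
have qmono := kernel_mono qK.
have decomp : forall T (t : Hom T B), t = (comp (comp t p1) i1 + comp (comp t p2) i2)%R.
  by move=> T t; rewrite !cA -compDr eid compm1.
pose p := comp q p1; pose b := comp q p2.
have pgbj : comp p g = comp b j.
  have := proj1 qK; rewrite /e compBr => /eqP; rewrite subr_eq0 => /eqP.
  by rewrite -!cA.
have bepi : is_epi b.
  move=> T u1 u2 bu; apply/eqP; rewrite -subr_eq0; apply/eqP.
  have h0 : comp q (comp p2 (u1 - u2)%R) = 0%R by rewrite -cA compBr -/b bu subrr.
  have [v [vp _]] := (proj2 eC) _ _ h0.
  have gv : comp g v = 0%R.
    by rewrite -i1e cA vp -cA e12 comp0m.
  have v0 : v = 0%R by apply: gepi; rewrite gv compm0.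
  rewrite v0 compm0 in vp.
  by rewrite -(comp1m (u1 - u2)%R) -e22 cA -vp compm0.
have m0 : comp (comp f i1) e = 0%R by rewrite cA i1e (proj1 fK).
have [a [aq _]] := (proj2 qK) _ _ m0.
have ap : comp a p = f by rewrite /p -cA aq cA e11 compm1.
have ab : comp a b = 0%R by rewrite /b -cA aq cA e12 compm0.
have aK : is_kernel b a.
  split => // T t tb.
  have tpg : comp (comp t p) g = 0%R by rewrite cA pgbj -cA tb comp0m.
  have [u [uf U]] := (proj2 fK) _ _ tpg.
  exists u; split.
    apply: qmono; rewrite cA aq -cA uf.
    by rewrite [RHS]decomp (cA t q p1) (cA t q p2) -/p -/b tb comp0m addr0.
  move=> v va; apply: U; by rewrite -va cA ap.
have bC : is_cokernel a b := epi_coker Cab bepi aK.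
have EP : E P by case: Eex => _ _ ext; apply: (ext _ _ _ a b) => //; split.
have hepi : is_epi (comp g k) := epi_comp gepi (coker_epi kC).
have pK : is_kernel (comp g k) p.
  split; first by rewrite -cA pgbj cA (proj1 jK) compm0.
  move=> T t tgk; rewrite -cA in tgk.
  have [w [wj W1]] := (proj2 jK) _ _ tgk.
  have t'e : comp (comp t i1 + comp w i2)%R e = 0%R.
    by rewrite compDl !cA i1e i2e compNr wj subrr.
  have [u [uq _]] := (proj2 qK) _ _ t'e.
  exists u; split.
    by rewrite /p -cA uq compDl !cA e11 e21 compm1 compm0 addr0.
  move=> v vp.
  have vb : comp v b = w.
    symmetry; apply: W1; by rewrite cA -pgbj -cA vp.
  apply: qmono; rewrite uq.
  by rewrite [RHS]decomp (cA v q p1) (cA v q p2) -/p -/b vp vb.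
have hC := epi_coker Cab hepi pK.
exists P, a, b, p; split => //; split => //; split => //.
Qed.

Definition castH {C : preadditive} {A A' B B' : Obj C} (e1 : A = A') (e2 : B = B') (h : Hom A B) : Hom A' B' :=
  match e1 in _ = A0, e2 in _ = B0 return Hom A0 B0 with erefl, erefl => h end.

Lemma castP {C : preadditive} (P : forall A B : Obj C, Hom A B -> Prop) (A A' B B' : Obj C)
  (e1 : A = A') (e2 : B = B') (h : Hom A B) : P A B h -> P A' B' (castH e1 e2 h).
Proof. by case: _ / e1; case: _ / e2. Qed.

Definition fac {C : preadditive} {E : Obj C -> Prop} {X : Obj C} (s : adm_series E X) (i : nat) (Q : Obj C) : Prop :=
  exists q : Hom (sobj s i.+1) Q, is_cokernel (smap s i) q.

Definition snoc_obj {C : preadditive} (F : nat -> Obj C) (L : nat) (Y : Obj C) (i : nat) : Obj C :=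
  if i == L.+1 then Y else F i.

Lemma sn_lt1 {C : preadditive} (F : nat -> Obj C) L Y i : (i < L)%coq_nat -> F i = snoc_obj F L Y i.
Proof. move/ltP => H; rewrite /snoc_obj; case: eqP => // e; lia. Qed.
Lemma sn_lt2 {C : preadditive} (F : nat -> Obj C) L Y i : (i < L)%coq_nat -> F i.+1 = snoc_obj F L Y i.+1.
Proof. move/ltP => H; rewrite /snoc_obj; case: eqP => // e; lia. Qed.
Lemma sn_eq1 {C : preadditive} (F : nat -> Obj C) L Y i : i = L -> F L = snoc_obj F L Y i.
Proof. move=> ->; rewrite /snoc_obj; case: eqP => // e; lia. Qed.
Lemma sn_eq2 {C : preadditive} (F : nat -> Obj C) L Y i : i = L -> Y = snoc_obj F L Y i.+1.
Proof. move=> ->; by rewrite /snoc_obj eqxx. Qed.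

Definition snoc_map {C : preadditive} (F : nat -> Obj C) (m : forall i, Hom (F i) (F i.+1)) (L : nat) (Y : Obj C)
  (h : Hom (F L) Y) (i : nat) : Hom (snoc_obj F L Y i) (snoc_obj F L Y i.+1) :=
  match lt_eq_lt_dec i L with
  | inleft (left H) => castH (@sn_lt1 C F L Y i H) (@sn_lt2 C F L Y i H) (m i)
  | inleft (right H) => castH (@sn_eq1 C F L Y i H) (@sn_eq2 C F L Y i H) h
  | inright _ => 0%R
  end.

Lemma snoc_map_lt {C : preadditive} (P : forall A B : Obj C, Hom A B -> Prop) (F : nat -> Obj C)
  (m : forall i, Hom (F i) (F i.+1)) (L : nat) (Y : Obj C) (h : Hom (F L) Y) (i : nat) :
  (i < L)%N -> P _ _ (m i) -> P _ _ (snoc_map m h i).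
Proof.
move=> H Pm; rewrite /snoc_map; case: (lt_eq_lt_dec i L) => [[H'|H']|H'].
- exact: castP.
- exfalso; lia.
- exfalso; move/ltP: H'; lia.
Qed.

Lemma snoc_map_eq {C : preadditive} (P : forall A B : Obj C, Hom A B -> Prop) (F : nat -> Obj C)
  (m : forall i, Hom (F i) (F i.+1)) (L : nat) (Y : Obj C) (h : Hom (F L) Y) (i : nat) :
  i = L -> P _ _ h -> P _ _ (snoc_map m h i).
Proof.
move=> H Pm; rewrite /snoc_map; case: (lt_eq_lt_dec i L) => [[H'|H']|H'].
- exfalso; move/ltP: H'; lia.
- exact: castP.
- exfalso; move/ltP: H'; lia.
Qed.

Lemma snoc_zero {C : preadditive} (F : nat -> Obj C) L Y : is_zero_obj (F 0) -> is_zero_obj (snoc_obj F L Y 0).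
Proof. by rewrite /snoc_obj. Qed.

Lemma snoc_top {C : preadditive} (F : nat -> Obj C) L Y : iso_obj (snoc_obj F L Y L.+1) Y.
Proof. rewrite /snoc_obj eqxx; exact: iso_obj_refl. Qed.

Lemma snoc_infl {C : preadditive} (E : Obj C -> Prop) {X Y : Obj C} (s : adm_series E X) (h : Hom (sobj s (slen s)) Y) :
  inflation E h -> forall i, (i < (slen s).+1)%N -> inflation E (snoc_map (smap s) h i).
Proof.
move=> hi i; rewrite ltnS leq_eqVlt => /orP [/eqP H|H].
  exact: (snoc_map_eq (P := fun A B x => inflation E x)).
exact: (@snoc_map_lt C (fun A B x => inflation E x) (sobj s) (smap s) (slen s) Y h i H (sinfl H)).
Qed.

Definition snoc {C : preadditive} {E : Obj C -> Prop} {X Y : Obj C} (s : adm_series E X) (h : Hom (sobj s (slen s)) Y)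
  (hi : inflation E h) : adm_series E Y :=
  @AdmSeries C E Y (slen s).+1 (snoc_obj (sobj s) (slen s) Y) (snoc_map (smap s) h)
    (snoc_zero _ _ (sobj0 s)) (snoc_infl hi) (snoc_top _ _ _).

Lemma slen_snoc {C : preadditive} {E : Obj C -> Prop} {X Y : Obj C} (s : adm_series E X) (h : Hom (sobj s (slen s)) Y)
  (hi : inflation E h) : slen (snoc hi) = (slen s).+1.
Proof. by []. Qed.

Lemma fac_snoc_lt {C : preadditive} {E : Obj C -> Prop} {X Y : Obj C} (s : adm_series E X) (h : Hom (sobj s (slen s)) Y)
  (hi : inflation E h) i Q : (i < slen s)%N -> fac s i Q -> fac (snoc hi) i Q.
Proof.
move=> H; exact: (snoc_map_lt (P := fun A B x => exists q : Hom B Q, is_cokernel x q)).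
Qed.

Lemma fac_snoc_top {C : preadditive} {E : Obj C -> Prop} {X Y : Obj C} (s : adm_series E X) (h : Hom (sobj s (slen s)) Y)
  (hi : inflation E h) i Q (q : Hom Y Q) : i = slen s -> is_cokernel h q -> fac (snoc hi) i Q.
Proof.
move=> H qc; apply: (snoc_map_eq (P := fun A B x => exists q : Hom B Q, is_cokernel x q)) => //.
by exists q.
Qed.

Definition trunc {C : preadditive} {E : Obj C -> Prop} {X : Obj C} (s : adm_series E X) (k : nat) (hk : (k <= slen s)%N) :
  adm_series E (sobj s k) :=
  @AdmSeries C E (sobj s k) k (sobj s) (smap s) (sobj0 s) (fun i hi => sinfl (leq_trans hi hk)) (iso_obj_refl _).

Definition restop {C : preadditive} {E : Obj C -> Prop} {X X' : Obj C} (s : adm_series E X) (h : iso_obj X X') :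
  adm_series E X' :=
  @AdmSeries C E X' (slen s) (sobj s) (smap s) (sobj0 s) (@sinfl _ _ _ s) (iso_obj_trans (stop s) h).

Lemma ltn0F (i : nat) : (i < 0)%N -> False. Proof. by []. Qed.

Definition empty_series {C : preadditive} (E : Obj C -> Prop) (Z : Obj C) (zZ : is_zero_obj Z) : adm_series E Z :=
  @AdmSeries C E Z 0 (fun _ => Z) (fun _ => 0%R) zZ (fun i hi => False_ind _ (ltn0F hi)) (iso_obj_refl Z).

Lemma infl_conf {C : preadditive} (E : Obj C -> Prop) {X Y Q : Obj C} (f : Hom X Y) (q : Hom Y Q) :
  exact_subcat E -> inflation E f -> is_cokernel f q -> conflation E f q.
Proof.
move=> [_ Eiso _] [V [g [EX EY EV [fK gC]]]] qC.
have [t [ti tq]] := coker_unique gC qC.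
have [t' [_ e1 _]] := iso_inv ti.
split => //; first by apply: (Eiso V) => //; exists t.
split => //; rewrite -tq; exact: (ker_isoR (t' := t') e1).
Qed.

Lemma G_lemma {C : preadditive} (E : Obj C -> Prop) (Phi : Obj C -> Prop) :
  abelian C -> exact_subcat E -> forall m (X Y Z : Obj C) (f : Hom X Y) (g : Hom Y Z),
  conflation E f g -> forall (s : adm_series E X) (t : adm_series E Z), slen t = m ->
  (forall j, (j < m)%N -> exists Q, fac t j Q /\ Phi Q) ->
  exists c : adm_series E Y, [/\ slen c = (slen s + m)%N,
    (forall i Q, (i < slen s)%N -> fac s i Q -> fac c i Q) &
    (forall j, (j < m)%N -> exists Q, [/\ fac c (slen s + j) Q, fac t j Q & Phi Q])].
Proof.
move=> Cab Eex; have Eex' := Eex; case: Eex' => _ Eiso Eext.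
elim=> [|m IH] X Y Z f g fg s t tm Ht.
  have zZ : is_zero_obj Z by apply: (zero_iso (sobj0 t)); rewrite -tm; exact: stop t.
  have fK : is_kernel g f by case: fg => _ _ _ [].
  have fi : is_iso f := ker_zero_iso zZ fK.
  exists (restop s (ex_intro _ f fi : iso_obj X Y)); split => //.
  by rewrite addn0.
have [Q [[q qC] PhiQ]] := Ht m (ltnSn m).
have mlt : (m < slen t)%N by rewrite tm.
have phiI := sinfl mlt.
have phiC : conflation E (smap t m) q := infl_conf Eex phiI qC.
have [rho rhoi] : iso_obj (sobj t m.+1) Z by rewrite -tm; exact: stop t.
have [rho' [_ r1 r2]] := iso_inv rhoi.
have conf2 : conflation E (comp (smap t m) rho) (comp rho' q).
  case: phiC => E1 E2 E3 se; split => //; first by case: fg.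
  exact: se_isoM.
have [P [a [b [p [ab pgq ap _]]]]] := core_lemma Cab Eex fg conf2.
have mle : (m <= slen t)%N by rewrite tm.
have [c' [c'len c's c't]] := IH _ _ _ a b ab s (trunc mle) erefl
   (fun j hj => Ht j (ltnW hj)).
have [sig sigi] := stop c'.
have hinfl : inflation E (comp sig p).
  exists Q, (comp g (comp rho' q)); case: pgq => E1 E2 E3 se; split => //.
    apply: (Eiso P) => //; apply: iso_obj_sym; by exists sig.
  exact: se_isoL.
exists (snoc hinfl); split.
- by rewrite slen_snoc c'len addnS.
- move=> i Q' hi fs; apply: fac_snoc_lt; first by rewrite c'len; apply: leq_trans hi (leq_addr _ _).
  exact: c's.
- move=> j; rewrite ltnS leq_eqVlt => /orP [/eqP ->|hj].
    exists Q; split => //; last by exists q.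
    apply: (@fac_snoc_top _ _ _ _ c' (comp sig p) hinfl (slen s + m) Q (comp g (comp rho' q))); first by rewrite c'len.
    have [sig' [_ e1 e2]] := iso_inv sigi.
    case: pgq => _ _ _ [_ cc]; exact: (coker_isoL (t' := sig') e2).
  have [Q' [f1 f2 f3]] := c't j hj.
  exists Q'; split => //; apply: fac_snoc_lt => //.
  by rewrite c'len ltn_add2l.
Qed.

Lemma zero_conf {C : preadditive} (E : Obj C -> Prop) (Z0 Y : Obj C) :
  is_zero_obj Z0 -> E Z0 -> E Y -> conflation E (0%R : Hom Z0 Y) (idm Y).
Proof.
move=> zZ EZ EY; split => //; split.
  split; first by rewrite comp0m.
  move=> W h; rewrite compm1 => ->; exists 0%R; split; first by rewrite compm0.
  move=> v _; exact: (proj2 (zZ W)).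
split; first by rewrite comp0m.
move=> W h _; exists h; split; first by rewrite comp1m.
by move=> v; rewrite comp1m.
Qed.

Lemma one_series_ex {C : preadditive} (E : Obj C -> Prop) (Y : Obj C) :
  exact_subcat E -> E Y -> exists b : adm_series E Y, slen b = 1%N /\ fac b 0 Y.
Proof.
move=> [[Z0 [zZ EZ]] _ _] EY.
have hi : inflation E (0%R : Hom (sobj (empty_series E zZ) (slen (empty_series E zZ))) Y).
  by exists Y, (idm Y); exact: zero_conf.
exists (snoc hi); split => //.
apply: (@fac_snoc_top _ _ _ _ _ _ hi 0 Y (idm Y)) => //.
by case: (zero_conf zZ EZ EY) => _ _ _ [].
Qed.

Definition fac_nz {C : preadditive} {E : Obj C -> Prop} {X : Obj C} (s : adm_series E X) :=
  forall i, (i < slen s)%N -> exists Q, fac s i Q /\ ~ is_zero_obj Q.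

Lemma proper_fac {C : preadditive} {E : Obj C -> Prop} {X : Obj C} (s : adm_series E X) :
  fac_nz s -> proper_series s.
Proof. move=> H i hi; have [Q [[q qc] nz]] := H i hi; by exists Q, q. Qed.

Lemma comp_fac {C : preadditive} {E : Obj C -> Prop} {X : Obj C} (s : adm_series E X) :
  composition_series s <-> (forall i, (i < slen s)%N -> exists Q, fac s i Q /\ simple_obj E Q).
Proof.
split=> H i hi; have [Q HQ] := H i hi.
  by case: HQ => q [qc sQ]; exists Q; split => //; exists q.
by case: HQ => [[q qc] sQ]; exists Q, q.
Qed.

Lemma not_simple {C : preadditive} (E : Obj C -> Prop) (Y : Obj C) :
  E Y -> ~ is_zero_obj Y -> ~ simple_obj E Y ->
  exists (W : Obj C) (i : Hom W Y), [/\ inflation E i, ~ is_zero_obj W & ~ is_iso i].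
Proof.
move=> EY nz ns; apply: NNPP => H; apply: ns; split => // W i ii.
apply: NNPP => H2; apply: H; exists W, i; split => // => [z|z]; apply: H2; by [left|right].
Qed.

Lemma exists_comp {C : preadditive} (E : Obj C -> Prop) :
  abelian C -> exact_subcat E -> length_cat E ->
  forall Y, E Y -> exists s : adm_series E Y, composition_series s.
Proof.
move=> Cab Eex Elen Y EY.
have [N HN] := Elen Y EY.
elim: N Y EY HN => [|k IH] Y EY HN.
- case: (classic (is_zero_obj Y)) => [zY|nzY].
    by exists (empty_series E zY).
  have [b [bl bf]] := one_series_ex Eex EY.
  have : (slen b <= 0)%N.
    apply: HN; apply: proper_fac => i; rewrite bl ltnS leqn0 => /eqP ->; by exists Y.
  by rewrite bl.
case: (classic (is_zero_obj Y)) => [zY|nzY].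
  by exists (empty_series E zY).
case: (classic (simple_obj E Y)) => [sY|nsY].
  have [b [bl bf]] := one_series_ex Eex EY.
  exists b; apply/comp_fac => i; rewrite bl ltnS leqn0 => /eqP ->; by exists Y.
have [W [i [ii nzW nii]]] := not_simple EY nzY nsY.
have [V [g ig]] := ii.
have Eex' := Eex; case: Eex' => _ Eiso _.
have nzV : ~ is_zero_obj V.
  move=> zV; apply: nii; case: ig => _ _ _ [iK _]; exact: ker_zero_iso zV iK.
have [EW _ EV _] := ig.
have bW : forall s : adm_series E W, proper_series s -> (slen s <= k)%N.
  move=> s ps; have [sig sigi] := stop s.
  have [sig' [_ e1 e2]] := iso_inv sigi.
  have hinfl : inflation E (comp sig i).
    exists V, g; case: ig => _ E2 E3 se; split => //.
      apply: (Eiso W) => //; apply: iso_obj_sym; by exists sig.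
    exact: se_isoL.
  have := HN (snoc hinfl); rewrite slen_snoc ltnS; apply; apply: proper_fac => j.
  rewrite slen_snoc ltnS leq_eqVlt => /orP [/eqP ->|hj].
    exists V; split => //; apply: (@fac_snoc_top _ _ _ _ _ _ hinfl (slen s) V g) => //.
    case: ig => _ _ _ [_ cc]; exact: (coker_isoL (t' := sig') e2).
  have [Q [q [qc nzQ]]] := ps j hj.
  exists Q; split => //; apply: fac_snoc_lt => //; by exists q.
have [bw [bwl bwf]] := one_series_ex Eex EW.
have bV : forall t : adm_series E V, proper_series t -> (slen t <= k)%N.
  move=> t pt.
  have [c [cl cs ct]] := G_lemma (Phi := fun Q => ~ is_zero_obj Q) Cab Eex ig bw (erefl (slen t))
     (fun j hj => match pt j hj with ex_intro Q (ex_intro q (conj qc nz)) =>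
                    ex_intro _ Q (conj (ex_intro _ q qc) nz) end).
  have := HN c; rewrite cl bwl add1n ltnS; apply; apply: proper_fac => j.
  rewrite cl bwl; case: j => [|j] hj.
    exists W; split => //; apply: cs => //; by rewrite bwl.
  have [Q [f1 _ f3]] := ct j hj; exists Q; split => //.
  by move: f1; rewrite bwl add1n.
have [sW cW] := IH W EW bW.
have [tV cV] := IH V EV bV.
move/comp_fac: cV => cV.
move/comp_fac: (cW) => cW'.
have [c [cl cs ct]] := G_lemma (Phi := simple_obj E) Cab Eex ig sW (erefl (slen tV)) cV.
exists c; apply/comp_fac => j; rewrite cl => hj.
case: (ltnP j (slen sW)) => hj'.
  have [Q [fq sq]] := cW' j hj'; exists Q; split => //; exact: cs.
have hh : (j - slen sW < slen tV)%N by rewrite ltn_subLR.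
have [Q [f1 _ f3]] := ct (j - slen sW)%N hh.
exists Q; split => //; by rewrite subnKC in f1.
Qed.

Lemma G_comp {C : preadditive} (E : Obj C -> Prop) :
  abelian C -> exact_subcat E -> forall (X Y Z : Obj C) (f : Hom X Y) (g : Hom Y Z),
  conflation E f g -> forall (s : adm_series E X) (t : adm_series E Z),
  composition_series s -> composition_series t ->
  exists c : adm_series E Y, [/\ composition_series c, slen c = (slen s + slen t)%N,
    (forall i Q, (i < slen s)%N -> fac s i Q -> fac c i Q) &
    (forall j, (j < slen t)%N -> exists Q, fac c (slen s + j) Q /\ fac t j Q)].
Proof.
move=> Cab Eex X Y Z f g fg s t /comp_fac cs /comp_fac ct.
have [c [cl c1 c2]] := G_lemma (Phi := simple_obj E) Cab Eex fg s (erefl (slen t)) ct.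
exists c; split => //.
- apply/comp_fac => j; rewrite cl => hj.
  case: (ltnP j (slen s)) => hj'.
    have [Q [fq sq]] := cs j hj'; exists Q; split => //; exact: c1.
  have hh : (j - slen s < slen t)%N by rewrite ltn_subLR.
  have [Q [f1 _ f3]] := c2 (j - slen s)%N hh.
  exists Q; split => //; by rewrite subnKC in f1.
- move=> j hj; have [Q [f1 f2 _]] := c2 j hj; by exists Q.
Qed.

Lemma fac_iso {C : preadditive} {E : Obj C -> Prop} {X : Obj C} (s : adm_series E X) i Q Q' :
  fac s i Q -> fac s i Q' -> iso_obj Q Q'.
Proof. move=> [q qc] [q' qc']; exact: coker_unique_obj qc qc'. Qed.

Lemma simple_iso {C : preadditive} (E : Obj C -> Prop) (Q Q' : Obj C) :
  exact_subcat E -> simple_obj E Q -> iso_obj Q Q' -> simple_obj E Q'.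
Proof.
move=> [_ Eiso _] [EQ nzQ sQ] [r ri]; have [r' [r'i e1 e2]] := iso_inv ri.
split; first by apply: (Eiso Q); last by exists r.
  move=> zQ'; apply: nzQ; apply: (zero_iso zQ'); by exists r'.
move=> W i [V [g [EW EQ' EV se]]].
have cf : conflation E (comp i r') (comp r g).
  split => //; exact: (se_isoM e2 e1).
have [zW|ii] : is_zero_obj W \/ is_iso (comp i r') by apply: sQ; exists V, (comp r g).
  by left.
right; have -> : i = comp (comp i r') r by rewrite cA e2 compm1.
exact: iso_comp.
Qed.

Lemma E_serre {C : preadditive} (E : Obj C -> Prop) : exact_subcat E -> is_serre E E.
Proof.
move=> [z Eiso _]; split; [by [] | exact: z | exact: Eiso | ].
by move=> X Y Z f g [EX EY EZ _].
Qed.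

Lemma serre_zero {C : preadditive} (E S : Obj C -> Prop) (Z : Obj C) :
  is_serre E S -> is_zero_obj Z -> S Z.
Proof.
move=> [_ [Z1 [zZ1 SZ1]] Siso _] zZ; apply: (Siso Z1) => //; exact: zero_zero_iso.
Qed.

Lemma part1 {C : preadditive} (E : Obj C -> Prop) (Xs : Obj C -> Prop) :
  exact_subcat E -> simp_subset E Xs -> is_serre E (serre_gen E Xs).
Proof.
move=> Eex [Xsimp _]; split.
- move=> X H; apply: H; first exact: E_serre.
  by move=> Z /Xsimp [].
- have [[Z0 [zZ EZ]] _ _] := Eex; exists Z0; split => // S Sser _; exact: serre_zero Sser zZ.
- move=> X Y H XY S Sser SX; case: (Sser) => _ _ Siso _; exact: Siso (H S Sser SX) XY.
- move=> X Y Z f g fg; split.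
    move=> H; split => S Sser SX; case: (Sser) => _ _ _ Sc;
      by have [] := (Sc _ _ _ _ _ fg).1 (H S Sser SX).
  move=> [HX HZ] S Sser SX; case: (Sser) => _ _ _ Sc.
  by apply: (Sc _ _ _ _ _ fg).2; split; [apply: HX|apply: HZ].
Qed.

Definition Tcl {C : preadditive} (E : Obj C -> Prop) (Xs : Obj C -> Prop) (Y : Obj C) : Prop :=
  E Y /\ forall s : adm_series E Y, composition_series s ->
    forall i Q, (i < slen s)%N -> fac s i Q -> Xs Q.

Lemma empty_comp {C : preadditive} (E : Obj C -> Prop) (Z : Obj C) (zZ : is_zero_obj Z) :
  composition_series (empty_series E zZ).
Proof. by []. Qed.

Lemma one_comp {C : preadditive} (E : Obj C -> Prop) (S : Obj C) :
  exact_subcat E -> simple_obj E S ->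
  exists b : adm_series E S, [/\ composition_series b, slen b = 1%N & fac b 0 S].
Proof.
move=> Eex sS; have [b [bl bf]] := one_series_ex Eex (let: And3 h _ _ := sS in h).
exists b; split => //; apply/comp_fac => i; rewrite bl ltnS leqn0 => /eqP ->.
by exists S.
Qed.

Lemma T_serre {C : preadditive} (E : Obj C -> Prop) (Xs : Obj C -> Prop) :
  abelian C -> exact_subcat E -> length_cat E -> jordan_hoelder E -> simp_subset E Xs ->
  is_serre E (Tcl E Xs) /\ (forall S, Xs S -> Tcl E Xs S).
Proof.
move=> Cab Eex Elen JH [Xsimp Xiso].
have Eex' := Eex; case: Eex' => [[Z0 [zZ EZ0]] Eiso Eext].
split; last first.
  move=> S XS; have sS := Xsimp S XS; case: (sS) => ES _ _; split => // s cs i Q hi fq.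
  have [b [cb bl bf]] := one_comp Eex sS.
  have [sl [sig [sigb _ sigf]]] := JH S ES s b cs cb.
  have [Q1 [q1 [Q1' [q1' [c1 c1' iso1]]]]] := sigf i hi.
  have s0 : sig i = 0%N by have := sigb i hi; rewrite sl bl ltnS leqn0 => /eqP.
  have i2 : iso_obj Q1' S by apply: (fac_iso (s := b) (i := 0%N)) => //; rewrite -s0; by exists q1'.
  have i3 : iso_obj Q Q1 by apply: (fac_iso fq); exists q1.
  apply: (Xiso S) => //; apply: iso_obj_sym; apply: iso_obj_trans i3 (iso_obj_trans iso1 i2).
split.
- by move=> X [].
- exists Z0; split => //; split => // s cs i Q hi fq.
  have [sl _] := JH Z0 EZ0 s (empty_series E zZ) cs (@empty_comp C E Z0 zZ).
  by move: hi; rewrite sl.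
- move=> X Y [EX HX] XY; split; first exact: Eiso EX XY.
  move=> s cs i Q hi fq; exact: (HX (restop s (iso_obj_sym XY)) cs i Q hi fq).
move=> X Y Z f g fg; have [EX EY EZ _] := fg; split.
  move=> [_ HY]; split.
    split => // s cs i Q hi fq.
    have [t ct] := exists_comp Cab Eex Elen EZ.
    have [c [cc cl c1 c2]] := G_comp Cab Eex fg cs ct.
    apply: (HY c cc i Q); first by rewrite cl; apply: leq_trans hi (leq_addr _ _).
    exact: c1.
  split => // t ct j Q hj fq.
  have [s cs] := exists_comp Cab Eex Elen EX.
  have [c [cc cl c1 c2]] := G_comp Cab Eex fg cs ct.
  have [Q0 [f0 f1]] := c2 j hj.
  apply: (Xiso Q0); last exact: fac_iso f1 fq.
  apply: (HY c cc _ _ _ f0); by rewrite cl ltn_add2l.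
move=> [[_ HX] [_ HZ]]; split => // u cu i Q hi fq.
have [s cs] := exists_comp Cab Eex Elen EX.
have [t ct] := exists_comp Cab Eex Elen EZ.
have [c [cc cl c1 c2]] := G_comp Cab Eex fg cs ct.
have [ul [sig [sigb _ sigf]]] := JH Y EY u c cu cc.
have [Q1 [q1 [Q1' [q1' [k1 k1' iso1]]]]] := sigf i hi.
have i3 : iso_obj Q Q1 by apply: (fac_iso fq); exists q1.
have fc : fac c (sig i) Q1' by exists q1'.
have lt : (sig i < slen s + slen t)%N by rewrite -cl -ul; exact: sigb.
have [Q2 [f2 x2]] : exists Q2, fac c (sig i) Q2 /\ Xs Q2.
  case: (ltnP (sig i) (slen s)) => hl.
    have [Q2 [fs _]] := (iffLR (comp_fac s)) cs _ hl.
    exists Q2; split; [exact: c1 | exact: HX s cs _ _ hl fs].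
  have hh : (sig i - slen s < slen t)%N by rewrite ltn_subLR.
  have [Q2 [f1 f3]] := c2 _ hh.
  rewrite subnKC in f1 => //.
  exists Q2; split => //; exact: HZ t ct _ _ hh f3.
apply: (Xiso Q2) => //; apply: iso_obj_sym.
apply: iso_obj_trans i3 (iso_obj_trans iso1 _); exact: fac_iso fc f2.
Qed.

Lemma inj_half {C : preadditive} (E : Obj C -> Prop) (Xs Xs' : Obj C -> Prop) :
  abelian C -> exact_subcat E -> length_cat E -> jordan_hoelder E ->
  simp_subset E Xs -> simp_subset E Xs' ->
  (forall Y, serre_gen E Xs Y -> serre_gen E Xs' Y) -> forall S, Xs S -> Xs' S.
Proof.
move=> Cab Eex Elen JH sXs sXs' H S XS.
have [Tser Tsub] := T_serre Cab Eex Elen JH sXs'.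
have g1 : serre_gen E Xs S by move=> S0 _ HS; exact: HS.
have [_ TS] := H S g1 _ Tser Tsub.
have [b [cb bl bf]] := one_comp Eex (sXs.1 S XS).
apply: (TS b cb 0%N S) => //; by rewrite bl.
Qed.

Lemma surj_part {C : preadditive} (E : Obj C -> Prop) (S : Obj C -> Prop) :
  abelian C -> exact_subcat E -> length_cat E -> is_serre E S ->
  exists Xs, simp_subset E Xs /\ (forall Y, S Y <-> serre_gen E Xs Y).
Proof.
move=> Cab Eex Elen Sser.
have Sser' := Sser; case: Sser' => SE _ Siso Sc.
exists (fun Q => S Q /\ simple_obj E Q); split.
  split; first by move=> Q [].
  move=> Q Q' [SQ sQ] QQ'; split; [exact: Siso SQ QQ' | exact: simple_iso Eex sQ QQ'].
move=> Y; split; last by move=> H; apply: H => // Z [].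
move=> SY T Tser TX.
have Tser' := Tser; case: Tser' => _ _ Tiso Tc.
have [c cc] := exists_comp Cab Eex Elen (SE Y SY).
have key : forall n (Y' : Obj C) (c : adm_series E Y'), composition_series c -> slen c = n -> S Y' -> T Y'.
  elim=> [|n IH] Y' c0 cc0 cl SY'.
    apply: serre_zero Tser _; apply: (zero_iso (sobj0 c0)); rewrite -cl; exact: stop c0.
  have [rho rhoi] : iso_obj (sobj c0 n.+1) Y' by rewrite -cl; exact: stop c0.
  have nlt : (n < slen c0)%N by rewrite cl.
  have [Q [q [qc sQ]]] := cc0 n nlt.
  have cf := infl_conf Eex (sinfl nlt) qc.
  have S1 : S (sobj c0 n.+1) by apply: Siso SY' _; apply: iso_obj_sym; by exists rho.
  have [Sn SQ] := (Sc _ _ _ _ _ cf).1 S1.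
  have nle : (n <= slen c0)%N by rewrite cl.
  have Tn : T (sobj c0 n) := IH _ (trunc nle) (fun i hi => cc0 i (leq_trans hi nle)) erefl Sn.
  have TQ : T Q by apply: TX.
  apply: Tiso ((Tc _ _ _ _ _ cf).2 (conj Tn TQ)) _; by exists rho.
exact: key _ _ c cc erefl SY.
Qed.

Theorem mainTheorem14 (C : preadditive) (E : Obj C -> Prop) :
  abelian C -> exact_subcat E -> length_cat E -> jordan_hoelder E ->
  [/\ (* the map is well defined: <Xs>_Serre is a Serre subcategory *)
      (forall Xs, simp_subset E Xs -> is_serre E (serre_gen E Xs)),
      (* injective *)
      (forall Xs Xs', simp_subset E Xs -> simp_subset E Xs' ->
        (forall Y, serre_gen E Xs Y <-> serre_gen E Xs' Y) ->
        forall S, Xs S <-> Xs' S),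
      (* surjective *)
      (forall S, is_serre E S ->
        exists Xs, simp_subset E Xs /\ (forall Y, S Y <-> serre_gen E Xs Y))
    & (* inclusion preserving *)
      forall Xs Xs', simp_subset E Xs -> simp_subset E Xs' ->
        (forall S, Xs S -> Xs' S) ->
        forall Y, serre_gen E Xs Y -> serre_gen E Xs' Y].
Proof.
move=> Cab Eex Elen JH; split.
- move=> Xs sXs; exact: part1.
- move=> Xs Xs' s1 s2 H S; split.
    apply: (inj_half Cab Eex Elen JH s1 s2) => Y; exact: (H Y).1.
  apply: (inj_half Cab Eex Elen JH s2 s1) => Y; exact: (H Y).2.
- move=> S Sser; exact: surj_part.
- move=> Xs Xs' _ _ sub Y H T Tser TX; apply: H => // Z XZ; exact: TX _ (sub _ XZ).
Qed.
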